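(* Let $G\ge 2$, $\Delta\in(0,1/2]$, and $p_t\in[\Delta,1-\Delta]$. Let $r_{t,1},\dots,r_{t,G}$ be i.i.d. $\mathrm{Bernoulli}(p_t)$, $R=\sum_j r_{t,j}$, $\hat p_t=R/G$, $\mathcal S=\{1\le R\le G-1\}$. For a real constant $c$ let $\tilde p_t=c\,\hat p_t$. Given $\delta\in(0,1)$, define \[ \epsilon_\delta:=\sqrt{\frac{1}{2G}\log\!\left(\frac{2}{\delta\bigl(1-(1-\Delta)^G-\Delta^G\bigr)}\right)}, \] $I_t:=[\hat p_t-\epsilon_\delta,\hat p_t+\epsilon_\delta]\cap[\Delta,1-\Delta]$, and $A(p):=1-(1-p)^G-p^G$. Fix $\epsilon>0$ and define \[ c_{\mathrm{low}}:=\sup_{p\in I_t}\frac{(p-\epsilon)A(p)}{p(1-p^{G-1})},\qquad c_{\mathrm{high}}:=\inf_{p\in I_t}\frac{(p+\epsilon)A(p)}{p(1-p^{G-1})}. \] Then, with probability at least $1-\delta$ conditional on $\mathcal S$ (over the draw of $\hat p_t$ determining $I_t$, $c_{\mathrm{low}}$, $c_{\mathrm{high}}$), every constant $c\in(c_{\mathrm{low}},c_{\mathrm{high}})$ satisfies $\mathbb E[\tilde p_t\mid\mathcal S]=c\,\mathbb E[\hat p_t\mid\mathcal S]\in(p_t-\epsilon,\ p_t+\epsilon)$.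
   Context: Binary-reward group setting: $G$ i.i.d. Bernoulli$(p_t)$ rewards for a prompt with expected reward $p_t$; $\hat p_t$ is the empirical group baseline; $\tilde p_t=c\hat p_t$ is a rescaled (''rectified'') baseline; $\mathcal S$ is the non-degenerate event. *)

(* Defs.v *)
From HB Require Import structures.
From mathcomp Require Import all_boot all_order all_algebra.
From mathcomp Require Import all_classical all_reals all_analysis.
Set Implicit Arguments. Unset Strict Implicit. Unset Printing Implicit Defensive.
Import Order.TTheory GRing.Theory Num.Theory.
Local Open Scope classical_set_scope.
Local Open Scope ring_scope.

Section Defs.
Variables (R : realType) (G : nat).

Definition outcome := {ffun 'I_G -> bool}.

Definition Rsum (w : outcome) : nat := (\sum_(i < G) (w i : nat))%N.

Definition bern_pmf (p : R) (w : outcome) : R :=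
  p ^+ Rsum w * (1 - p) ^+ (G - Rsum w).

Definition prob (p : R) (E : set outcome) : R :=
  \sum_(w : outcome | `[< E w >]) bern_pmf p w.

Definition nondeg : set outcome := [set w | (1 <= Rsum w <= G - 1)%N].

Definition condprob (p : R) (E S : set outcome) : R :=
  prob p (E `&` S) / prob p S.

Definition condexp (p : R) (X : outcome -> R) (S : set outcome) : R :=
  (\sum_(w : outcome | `[< S w >]) X w * bern_pmf p w) / prob p S.

Definition phat (w : outcome) : R := (Rsum w)%:R / G%:R.

Definition Anondeg (p : R) : R := 1 - (1 - p) ^+ G - p ^+ G.

Definition eps_delta (Delta delta : R) : R :=
  Num.sqrt (1 / (2 * G%:R) * ln (2 / (delta * Anondeg Delta))).

Definition It (Delta delta x : R) : set R :=
  [set q | x - eps_delta Delta delta <= q <= x + eps_delta Delta delta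
           /\ Delta <= q <= 1 - Delta].

Definition ratio (a q : R) : R := a * Anondeg q / (q * (1 - q ^+ (G - 1))).

Definition c_low (Delta delta eps x : R) : \bar R :=
  ereal_sup [set ((ratio (q - eps) q)%:E) | q in It Delta delta x].

Definition c_high (Delta delta eps x : R) : \bar R :=
  ereal_inf [set ((ratio (q + eps) q)%:E) | q in It Delta delta x].

End Defs.

(* Main.v *)
Require Import Defs.
From HB Require Import structures.
From mathcomp Require Import all_boot all_order all_algebra.
From mathcomp Require Import all_classical all_reals all_analysis.
From mathcomp Require Import ring lra zify.
Import Order.TTheory GRing.Theory Num.Theory.
Import numFieldNormedType.Exports.
Local Open Scope classical_set_scope.
Local Open Scope ring_scope.

Section Aux1.
Variable R : realType.
Lemma mvt_ge (f df : R -> R) (a b : R) : a <= b -> (forall x : R, is_derive x 1 f (df x)) ->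
  (forall x, a <= x <= b -> 0 <= df x) -> f a <= f b.
Proof.
move=> ab hd hpos.
have cf : {within `[a, b], continuous f}.
  apply/continuous_subspaceT => r; case: (hd r) => dr _.
  exact/differentiable_continuous/derivable1_diffP.
have [c] := MVT_segment ab (fun x _ => hd x) cf.
rewrite in_itv /= => cab E.
by rewrite -subr_ge0 E; apply: mulr_ge0; [exact: hpos | rewrite subr_ge0].
Qed.

Lemma mvt_le (f df : R -> R) (a b : R) : a <= b -> (forall x : R, is_derive x 1 f (df x)) ->
  (forall x, a <= x <= b -> df x <= 0) -> f b <= f a.
Proof.
move=> ab hd hneg.
rewrite -lerN2; apply: (@mvt_ge (fun x => - f x) (fun x => - df x)) => //.
by move=> x /hneg; rewrite oppr_ge0.
Qed.

Lemma hoeff_lemma (p x : R) : 0 <= p <= 1 ->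
  1 - p + p * expR x <= expR (x * p + x ^+ 2 / 8).
Proof.
move=> /andP[p0 p1].
pose h y := 1 - p + p * expR y.
have hpos (y : R) : 0 < h y.
  rewrite /h; have := expR_gt0 y; case: (ltrP p 1) => pl1 E.
    have := mulr_ge0 p0 (ltW E); lra.
  have -> : p = 1 by apply/eqP; rewrite eq_le p1.
  lra.
have hn0 (y : R) : h y != 0 by rewrite gt_eqF.
have Hh (y : R) : is_derive y 1 h (p * expR y).
  by apply: is_derive_eq; rewrite add0r mul1r.
pose u y := p * expR y / h y.
have Hu (y : R) : is_derive y 1 u (p * expR y * (1 - p) / (h y) ^+ 2).
  rewrite /u; apply: is_derive_eq.
  by rewrite /GRing.scale /= /h; field; rewrite -/(h y).
pose d y := p + y / 4 - u y.
have Hd (y : R) : is_derive y 1 d (1/4 - p * expR y * (1 - p) / (h y) ^+ 2).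
  rewrite /d; apply: is_derive_eq.
  by rewrite /GRing.scale /=; field.
have Hl (y : R) : is_derive y 1 (@ln R \o h) ((h y)^-1 * (p * expR y)).
  exact: is_derive1_comp (is_derive1_ln (hpos y)) (Hh y).
pose g y := y * p + y ^+ 2 / 8 - (@ln R \o h) y.
have Hg (y : R) : is_derive y 1 g (d y).
  rewrite /g; apply: is_derive_eq.
  by rewrite /GRing.scale /= /d /u; field; exact: hn0.
have d0 : d 0 = 0.
  by rewrite /d /u /h expR0 mulr1 subrK; field.
have g0 : g 0 = 0.
  by rewrite /g /= /h expR0 mulr1 subrK ln1; ring.
have d'ge0 (y : R) : 0 <= 1/4 - p * expR y * (1 - p) / (h y) ^+ 2.
  have hy := hpos y; have E := expR_gt0 y.
  rewrite subr_ge0 ler_pdivrMr ?exprn_gt0 //.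
  have : h y = (1 - p) + p * expR y by [].
  set k := h y; set b := p * expR y => kE.
  rewrite kE; have := sqr_ge0 (1 - p - b); nra.
have dpos (y : R) : 0 <= y -> 0 <= d y.
  move=> y0; rewrite -d0; have := (@mvt_ge d _ 0 y y0 Hd); apply=> z _; exact: d'ge0.
have dneg (y : R) : y <= 0 -> d y <= 0.
  move=> y0; rewrite -d0; have := (@mvt_ge d _ y 0 y0 Hd); apply=> z _; exact: d'ge0.
have gx : 0 <= g x.
  rewrite -g0; case: (lerP 0 x) => x0.
    have := (@mvt_ge g _ 0 x x0 Hg); apply=> z /andP[z0 _]; exact: dpos.
  have := (@mvt_le g _ x 0 (ltW x0) Hg); apply=> z /andP[_ z0]; exact: dneg.
have hx := hpos x.
rewrite -/(h x) -[h x]lnK ?posrE // ler_expR.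
move: gx; rewrite /g /=; lra.
Qed.
End Aux1.

Section Aux2.
Variables (R : realType) (G : nat).
Lemma powsum_mono (D q : R) : 0 < D <= 1/2 -> D <= q <= 1/2 ->
  q ^+ G + (1 - q) ^+ G <= D ^+ G + (1 - D) ^+ G.
Proof.
move=> /andP[D0 D1] /andP[Dq q1].
pose f (y : R) := y ^+ G + (1 - y) ^+ G.
have Hf (y : R) : is_derive y 1 f (G%:R * y ^+ G.-1 - G%:R * (1 - y) ^+ G.-1).
  have -> : f = ((@id R) ^+ G + (fun z : R => 1 - z) ^+ G)%R.
    by apply/funext => z; rewrite /f /= !exprfctE.
  by apply: is_derive_eq; rewrite /GRing.scale /=; ring.
apply: (@mvt_le R f _ D q Dq Hf) => z /andP[z0 z1].
rewrite subr_le0 ler_wpM2l // lerXn2r // ?nnegrE; lra.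
Qed.

Lemma pmf_prod (p : R) (w : outcome G) :
  bern_pmf p w = \prod_i (if w i then p else 1 - p).
Proof.
rewrite /bern_pmf /Rsum.
have -> : (G - \sum_i w i)%N = (\sum_i (1 - w i))%N.
  rewrite sumnB; last by move=> i _; case: (w i).
  by rewrite sum_nat_const card_ord muln1.
rewrite -!prodrXr -big_split /=; apply: eq_bigr => i _.
by case: (w i); rewrite /= ?expr1 ?expr0 ?mulr1 ?mul1r.
Qed.

Lemma sum_prod (F : 'I_G -> bool -> R) :
  \sum_(w : outcome G) \prod_i F i (w i) = \prod_i (F i true + F i false).
Proof.
symmetry; rewrite (eq_bigr (fun i => \sum_(b : bool) F i b)); last first.
  by move=> i _; rewrite big_bool.
by rewrite bigA_distr_bigA.
Qed.


Lemma pmf_total (p : R) : \sum_(w : outcome G) bern_pmf p w = 1.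
Proof.
under eq_bigr => w _ do rewrite pmf_prod.
rewrite (sum_prod (fun i b => if b then p else 1 - p)); apply: big1 => i _; by rewrite addrC subrK.
Qed.

Lemma pmf_mgf (p l : R) :
  \sum_(w : outcome G) bern_pmf p w * expR (l * (Rsum w)%:R) = (1 - p + p * expR l) ^+ G.
Proof.
have E (w : outcome G) : bern_pmf p w * expR (l * (Rsum w)%:R)
    = \prod_i (if w i then p * expR l else 1 - p).
  rewrite pmf_prod /Rsum natr_sum mulr_sumr expR_sum -big_split /=.
  by apply: eq_bigr => i _; case: (w i); rewrite /= ?mulr1n ?mulr0n ?mulr1 ?mulr0 ?expR0 ?mulr1.
rewrite (eq_bigr _ (fun w _ => E w)) (sum_prod (fun i b => if b then p * expR l else 1 - p)) prodr_const card_ord.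
by rewrite addrC.
Qed.

Lemma pmf_marg (p : R) (i : 'I_G) :
  \sum_(w : outcome G) (w i)%:R * bern_pmf p w = p.
Proof.
pose F j (b : bool) := if j == i then (if b then p else 0) else (if b then p else 1 - p).
have E (w : outcome G) : (w i)%:R * bern_pmf p w = \prod_j F j (w j).
  rewrite pmf_prod (bigD1 i) //= [RHS](bigD1 i) //= mulrA; congr (_ * _).
    by rewrite /F eqxx; case: (w i); rewrite /= ?mulr1n ?mulr0n ?mul1r ?mul0r.
  by apply: eq_bigr => j /negbTE ji; rewrite /F ji.
rewrite (eq_bigr _ (fun w _ => E w)) (sum_prod F) (bigD1 i) //= big1 ?mulr1.
  by rewrite /F eqxx addr0.
by move=> j /negbTE ji; rewrite /F ji addrC subrK.
Qed.

Lemma pmf_mean (p : R) :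
  \sum_(w : outcome G) (Rsum w)%:R * bern_pmf p w = G%:R * p.
Proof.
under eq_bigr => w _ do rewrite /Rsum natr_sum mulr_suml.
rewrite exchange_big /=.
under eq_bigr => i _ do rewrite pmf_marg.
by rewrite sumr_const card_ord mulr_natl.
Qed.

Definition w0 : outcome G := [ffun => false].
Definition w1 : outcome G := [ffun => true].

Lemma Rsum_le (w : outcome G) : (Rsum w <= G)%N.
Proof.
have E : (\sum_(i < G) 1 = G)%N by rewrite sum_nat_const card_ord muln1.
rewrite /Rsum -[X in (_ <= X)%N]E; apply: leq_sum => i _; exact: leq_b1.
Qed.

Lemma Rsum0 (w : outcome G) : (Rsum w == 0)%N = (w == w0).
Proof.
rewrite /Rsum sum_nat_eq0; apply/forallP/eqP => [H|->].
  apply/ffunP => i; rewrite ffunE; move/(_ i): H; by case: (w i).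
by move=> i; rewrite ffunE.
Qed.

Lemma RsumG (w : outcome G) : (Rsum w == G) = (w == w1).
Proof.
have H : (Rsum w + \sum_i (1 - w i) = G)%N.
  rewrite /Rsum -big_split /= (eq_bigr (fun=> 1%N)) ?sum_nat_const ?card_ord ?muln1 //.
  by move=> i _; case: (w i).
apply/eqP/eqP => [E | ->].
  apply/ffunP => i; rewrite ffunE.
  have : (\sum_i (1 - w i) == 0)%N by apply/eqP; lia.
  by rewrite sum_nat_eq0 => /forallP/(_ i); case: (w i).
rewrite /Rsum (eq_bigr (fun=> 1%N)) ?sum_nat_const ?card_ord ?muln1 //.
by move=> i _; rewrite ffunE.
Qed.

Lemma w01 : (0 < G)%N -> w0 != w1.
Proof.
move=> G0; apply/negP => /eqP/ffunP/(_ (Ordinal G0)); by rewrite !ffunE.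
Qed.

Lemma nondegE (w : outcome G) : (1 <= G)%N -> `[< nondeg w >] = (w != w0) && (w != w1).
Proof.
move=> G1; rewrite asboolb -Rsum0 -RsumG; have := Rsum_le w.
case: (Rsum w) => [|n] /=; first by [].
move=> nG; rewrite /= ; apply/idP/idP; lia.
Qed.

Lemma sumS (F : outcome G -> R) : (1 <= G)%N ->
  \sum_(w | `[< nondeg w >]) F w = \sum_w F w - F w0 - F w1.
Proof.
move=> G1.
have w10 : w1 != w0 by rewrite eq_sym w01.
rewrite [in RHS](bigD1 w0) //= [in RHS](bigD1 w1) /= ?w10 //.
have -> : \sum_(w | `[< nondeg w >]) F w = \sum_(w | (true && (w != w0)) && (w != w1)) F w.
  by apply: eq_bigl => w; rewrite nondegE.
ring.
Qed.

Lemma pmf_w0 (p : R) : bern_pmf p w0 = (1 - p) ^+ G.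
Proof.
have /eqP E : (Rsum w0 == 0)%N by rewrite Rsum0.
by rewrite /bern_pmf E expr0 mul1r subn0.
Qed.

Lemma pmf_w1 (p : R) : bern_pmf p w1 = p ^+ G.
Proof.
have /eqP E : (Rsum w1 == G)%N by rewrite RsumG.
by rewrite /bern_pmf E subnn expr0 mulr1.
Qed.

Lemma probS (p : R) : (1 <= G)%N -> prob p (@nondeg G) = Anondeg G p.
Proof.
move=> G1; rewrite /prob sumS // pmf_total pmf_w0 pmf_w1 /Anondeg //.
Qed.

Lemma meanS (p : R) : (1 <= G)%N ->
  \sum_(w : outcome G | `[< nondeg w >]) phat R w * bern_pmf p w = p - p ^+ G.
Proof.
move=> G1; have G0 : (G%:R : R) != 0 by rewrite pnatr_eq0 -lt0n.
rewrite sumS //.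
under eq_bigr => w _ do rewrite /phat mulrAC.
rewrite -mulr_suml pmf_mean pmf_w0 pmf_w1 /phat.
have -> : Rsum w0 = 0%N by apply/eqP; rewrite Rsum0.
have -> : Rsum w1 = G by apply/eqP; rewrite RsumG.
by field.
Qed.

End Aux2.

Theorem lemma1 (R : realType) (G : nat) (Delta p delta eps : R) :
  (2 <= G)%N ->
  0 < Delta <= 1 / 2 ->
  Delta <= p <= 1 - Delta ->
  0 < delta < 1 ->
  0 < eps ->
  1 - delta <=
  condprob p
    [set w : outcome G | forall c : R,
       (c_low G Delta delta eps (phat R w) < c%:E < c_high G Delta delta eps (phat R w))%E ->
       condexp p (fun v => c * phat R v) (@nondeg G)
         = c * condexp p (@phat R G) (@nondeg G)
       /\ p - eps < c * condexp p (@phat R G) (@nondeg G) < p + eps]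
    (@nondeg G).
Proof.
move=> G2 /andP[D0 D1] /andP[Dp pD] /andP[d0 d1] e0.
have G1 : (1 <= G)%N by exact: ltnW.
have G0r : (0 : R) < G%:R by rewrite ltr0n.
have p0 : 0 < p by apply: lt_le_trans Dp.
have p1 : p < 1 by lra.
have powlt (x : R) : 0 < x -> x < 1 -> x ^+ G < x.
  move=> x0 x1.
  have -> : x ^+ G = x * x ^+ (G - 1) by rewrite -exprS subn1 prednK.
  have : x ^+ (G - 1) < 1 by rewrite exprn_ilt1 ?(ltW x0) // subn_eq0 -ltnNge.
  by move=> h; rewrite -[X in _ < X]mulr1 ltr_pM2l.
have powge (x : R) : 0 <= x -> 0 <= x ^+ G by move=> x0; exact: exprn_ge0.
have Ap : 0 < Anondeg G p.
  rewrite /Anondeg; have := powlt p p0 p1; have := powlt (1 - p); lra.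
have AD : 0 < Anondeg G Delta.
  rewrite /Anondeg; have := powlt Delta D0; have := powlt (1 - Delta); lra.
have AD1 : Anondeg G Delta <= 1.
  rewrite /Anondeg; have := powge Delta; have := powge (1 - Delta); lra.
have ADle : Anondeg G Delta <= Anondeg G p.
  rewrite /Anondeg; case: (lerP p (1/2)) => ph.
    have := @powsum_mono R G Delta p; rewrite D0 D1 Dp ph /=; lra.
  have := @powsum_mono R G Delta (1 - p); rewrite D0 D1 /=.
  have -> : 1 - (1 - p) = p by ring.
  have -> : (Delta <= 1 - p) = true by apply/idP; lra.
  have -> : (1 - p <= 1/2) = true by apply/idP; lra.
  move=> /(_ isT isT); lra.
have Dpos : 0 < p - p ^+ G by have := powlt p p0 p1; lra.
have EE : condexp p (@phat R G) (@nondeg G) = (p - p ^+ G) / Anondeg G p.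
  by rewrite /condexp meanS // probS.
set t := eps_delta G Delta delta.
set Ev := [set w : outcome G | _].
have good (w : outcome G) : phat R w - t <= p <= phat R w + t -> Ev w.
  move=> H c /andP[cl ch]; split.
    rewrite /condexp mulrA mulr_sumr; congr (_ / _).
    by apply: eq_bigr => v _; rewrite mulrA.
  have Ip : It G Delta delta (phat R w) p by split => //; rewrite Dp pD.
  have Dq : p * (1 - p ^+ (G - 1)) = p - p ^+ G.
    by rewrite mulrBr mulr1 -exprS subn1 prednK.
  have cl' : Defs.ratio G (p - eps) p < c.
    have H' : ((Defs.ratio G (p - eps) p)%:E <= c_low G Delta delta eps (phat R w))%E.
      by apply: ereal_sup_ubound; exists p.
    by rewrite -lte_fin; exact: le_lt_trans H' cl.
  have ch' : c < Defs.ratio G (p + eps) p.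
    have H' : (c_high G Delta delta eps (phat R w) <= (Defs.ratio G (p + eps) p)%:E)%E.
      by apply: ereal_inf_lbound; exists p.
    by rewrite -lte_fin; exact: lt_le_trans ch H'.
  move: cl' ch'; rewrite /Defs.ratio Dq EE => cl' ch'.
  move: cl'; rewrite ltr_pdivrMr // => cl'.
  move: ch'; rewrite ltr_pdivlMr // => ch'.
  by rewrite mulrA ltr_pdivlMr // ltr_pdivrMr // cl' ch'.
have pmf0 (w : outcome G) : 0 <= bern_pmf p w.
  by rewrite /bern_pmf mulr_ge0 // exprn_ge0 //; lra.
set X := 2 / (delta * Anondeg G Delta).
have Xgt1 : 1 < X.
  rewrite /X ltr_pdivlMr ?mulr_gt0 // mul1r.
  have := ler_wpM2l (ltW d0) AD1; lra.
have lnX : 0 < ln X by exact: ln_gt0.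
have iG : 0 < 1 / (2 * G%:R) :> R by rewrite mul1r invr_gt0 mulr_gt0.
have t2 : t ^+ 2 = 1 / (2 * G%:R) * ln X.
  by rewrite /t /eps_delta -/X sqr_sqrtr // mulr_ge0 // ltW.
have tpos : 0 < t by rewrite /t /eps_delta -/X sqrtr_gt0 mulr_gt0.
set lam := 4 * t.
pose B (w : outcome G) := expR (lam * ((Rsum w)%:R - G%:R * (p + t)))
   + expR (- lam * ((Rsum w)%:R - G%:R * (p - t))).
have Bge1 (w : outcome G) : ~ (phat R w - t <= p <= phat R w + t) -> 1 <= B w.
  move=> nH.
  have rE : (Rsum w)%:R = phat R w * G%:R by rewrite /phat divfK // gt_eqF.
  have e1 := expR_gt0 (lam * ((Rsum w)%:R - G%:R * (p + t))).
  have e2 := expR_gt0 (- lam * ((Rsum w)%:R - G%:R * (p - t))).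
  case: (lerP (phat R w - t) p) => h1; last first.
    have : 0 <= lam * ((Rsum w)%:R - G%:R * (p + t)).
      rewrite rE; apply: mulr_ge0; first by rewrite /lam; lra.
      have -> : phat R w * G%:R - G%:R * (p + t) = G%:R * (phat R w - t - p) by ring.
      apply: mulr_ge0; lra.
    move=> hx; have := expR_ge1Dx (lam * ((Rsum w)%:R - G%:R * (p + t))).
    rewrite /B; lra.
  case: (lerP p (phat R w + t)) => h2.
    by exfalso; apply: nH; rewrite h1 h2.
  have : 0 <= - lam * ((Rsum w)%:R - G%:R * (p - t)).
    rewrite rE; apply: mulr_le0; first by rewrite /lam; lra.
    have -> : phat R w * G%:R - G%:R * (p - t) = - (G%:R * (p - t - phat R w)) by ring.
    rewrite oppr_le0; apply: mulr_ge0; lra.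
  move=> hx; have := expR_ge1Dx (- lam * ((Rsum w)%:R - G%:R * (p - t))).
  rewrite /B; lra.
have hb (l : R) : (1 - p + p * expR l) ^+ G <= expR (G%:R * (l * p + l ^+ 2 / 8)).
  rewrite expRM_natl; apply: lerXn2r; rewrite ?nnegrE.
  - by apply: addr_ge0; [lra | apply: mulr_ge0; [lra | exact: expR_ge0]].
  - exact: expR_ge0.
  by apply: (@hoeff_lemma R p l); rewrite (ltW p0) (ltW p1).
have sumB : \sum_(w : outcome G) bern_pmf p w * B w <= delta * Anondeg G Delta.
  have -> : \sum_(w : outcome G) bern_pmf p w * B w =
     expR (- (lam * (G%:R * (p + t)))) * \sum_(w : outcome G) bern_pmf p w * expR (lam * (Rsum w)%:R)
   + expR (lam * (G%:R * (p - t))) * \sum_(w : outcome G) bern_pmf p w * expR ((- lam) * (Rsum w)%:R).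
    rewrite /B; under eq_bigr => w _ do rewrite mulrDr.
    rewrite big_split /= !mulr_sumr; congr (_ + _); apply: eq_bigr => w _.
      by rewrite mulrBr expRD; ring.
    have eK : expR (- (- lam * (G%:R * (p - t)))) = expR (lam * (G%:R * (p - t))).
      by congr expR; ring.
    by rewrite mulrBr expRD eK; ring.
  rewrite !pmf_mgf.
  apply: le_trans (lerD (ler_wpM2l (expR_ge0 _) (hb lam)) (ler_wpM2l (expR_ge0 _) (hb (- lam)))) _.
  rewrite -!expRD.
  have lnXE : ln X = 2 * G%:R * t ^+ 2.
    by rewrite t2; field; rewrite gt_eqF.
  have -> : - (lam * (G%:R * (p + t))) + G%:R * (lam * p + lam ^+ 2 / 8) = - ln X.
    by rewrite lnXE /lam; field.
  have -> : lam * (G%:R * (p - t)) + G%:R * (- lam * p + (- lam) ^+ 2 / 8) = - ln X.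
    by rewrite lnXE /lam; field.
  rewrite expRN lnK ?posrE; last by apply: lt_trans Xgt1.
  rewrite /X le_eqVlt; apply/orP; left; apply/eqP; field.
  by rewrite !gt_eqF.
have bad : \sum_(w : outcome G | `[< nondeg w >] && ~~ `[< Ev w >]) bern_pmf p w
    <= delta * Anondeg G Delta.
  apply: le_trans sumB.
  apply: (@le_trans _ _ (\sum_(w : outcome G | `[< nondeg w >] && ~~ `[< Ev w >]) bern_pmf p w * B w)).
    apply: ler_sum => w /andP[_ /asboolPn nE].
    have := Bge1 w (fun h => nE (good w h)) => b1.
    by rewrite -{1}[bern_pmf p w]mulr1 ler_wpM2l.
  rewrite [X in _ <= X](bigID (fun w => `[< nondeg w >] && ~~ `[< Ev w >])) /= lerDl.
  apply: sumr_ge0 => w _; apply: mulr_ge0 => //.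
  by rewrite /B addr_ge0 // expR_ge0.
have spl : prob p (@nondeg G) = prob p (Ev `&` @nondeg G)
    + \sum_(w : outcome G | `[< nondeg w >] && ~~ `[< Ev w >]) bern_pmf p w.
  rewrite /prob (bigID (fun w => `[< Ev w >])) /=; congr (_ + _).
  apply: eq_bigl => w.
  apply/idP/idP => [/andP[/asboolP s /asboolP e]|/asboolP [e s]].
    by apply/asboolP; split.
  by apply/andP; split; apply/asboolP.
rewrite /condprob ler_pdivlMr ?probS //.
move: spl; rewrite probS // => spl.
have := ler_wpM2l (ltW d0) ADle.
lra.
Qed.
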